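(* Let $0<q<1$, let $k,n$ be nonnegative integers and let $x\in[0,1]$. Then $$B_{k,n}(x,q)=\sum_{i=k}^{n}\binom{i}{k}\binom{n}{i}(-1)^{i-k}q^{(1-x)(i-k)}[x]_q^{i},$$ where an empty sum (when $k>n$) is $0$.
   Context: Let $q$ be a real number with $0<q<1$. For real $x$, the $q$-number is $[x]_q=\frac{1-q^x}{1-q}$. For a nonnegative integer $k$ and $x\in[0,1]$, the modified $q$-Bernstein polynomials $B_{k,n}(x,q)$, $n=0,1,2,\dots$, are defined by the generating function $$\frac{t^k e^{[1-x]_q t}[x]_q^k}{k!}=\sum_{n=0}^\infty B_{k,n}(x,q)\frac{t^n}{n!}.$$ *)

(* Defs.v *)
From Stdlib Require Import Reals Factorial.
From Coquelicot Require Import Coquelicot.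
Open Scope R_scope.

Definition qnum (q x : R) : R := (1 - Rpower q x) / (1 - q).

Definition qBernstein_gf (k : nat) (x q t : R) : R :=
  t ^ k * exp (qnum q (1 - x) * t) * (qnum q x) ^ k / INR (fact k).

(* B : nat -> R is the family n |-> B_{k,n}(x,q) defined by the generating
   function:  gf(t) = sum_n B n t^n / n!  for every real t. *)
Definition is_modified_qBernstein (k : nat) (x q : R) (B : nat -> R) : Prop :=
  forall t : R, is_series (fun n => B n * t ^ n / INR (fact n)) (qBernstein_gf k x q t).

(* Main.v *)
Require Import Defs.
From Stdlib Require Import Reals Lia Lra Factorial.
From Coquelicot Require Import Coquelicot.
Open Scope R_scope.

Lemma shift_sum (a : nat -> R) k m :
  sum_n_m a k (k + m) = sum_n_m (fun j => a (k + j)%nat) 0 m.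
Proof.
  revert a; induction k as [|k IH]; intros a; simpl.
  - apply sum_n_m_ext; intros; reflexivity.
  - rewrite <- sum_n_m_S. rewrite IH. apply sum_n_m_ext; intros j.
    f_equal.
Qed.

Lemma radius_pos (a : nat -> R) (f : R -> R) :
  (forall t, is_pseries a t (f t)) -> Rbar_lt 0 (CV_radius a).
Proof.
  intros H.
  assert (Hl : is_lim_seq (fun n => a n * 1 ^ n) 0).
  { apply ex_series_lim_0. exists (f 1).
    eapply is_series_ext; [|apply (H 1)]. intros n; simpl.
    rewrite pow_n_pow. unfold scal; simpl. unfold mult; simpl. ring. }
  destruct (CV_radius a) as [r| |] eqn:E; simpl; auto.
  - destruct (Rlt_or_le 0 r) as [h|h]; auto.
    exfalso. apply (CV_disk_outside a 1); [|exact Hl].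
    rewrite E; simpl. rewrite Rabs_R1. lra.
  - pose proof (CV_radius_ge_0 a) as G. rewrite E in G. simpl in G. auto.
Qed.

Lemma coef_eq (a : nat -> R) (f : R -> R) n :
  (forall t, is_pseries a t (f t)) -> Derive_n f n 0 = a n * INR (fact n).
Proof.
  intros H. rewrite <- Derive_n_coef by (eapply radius_pos; eauto).
  apply Derive_n_ext. intros t. symmetry. apply is_pseries_unique, H.
Qed.

Lemma gf_series k x q t :
  is_pseries (PS_scal (qnum q x ^ k / INR (fact k))
     (PS_incr_n (fun n => qnum q (1 - x) ^ n / INR (fact n)) k)) t
     (qBernstein_gf k x q t).
Proof.
  set (a0 := qnum q (1 - x)).
  assert (He : is_pseries (fun n => a0 ^ n / INR (fact n)) t (exp (a0 * t))).
  { pose proof (is_exp_Reals (a0 * t)) as H. unfold is_pseries in *.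
    eapply is_series_ext; [|exact H]. intros n. simpl.
    rewrite !pow_n_pow. unfold scal; simpl. unfold mult; simpl.
    rewrite Rpow_mult_distr. replace (pow_n t n) with (t^n) by (symmetry; apply pow_n_pow). unfold Rdiv. ring. }
  apply (is_pseries_incr_n _ k) in He.
  apply (is_pseries_scal (qnum q x ^ k / INR (fact k))) in He.
  2: { exact (Rmult_comm _ _). }
  assert (E : qBernstein_gf k x q t =
    scal (qnum q x ^ k / INR (fact k)) (scal (pow_n t k) (exp (a0 * t)))).
  2: { rewrite E; exact He. }
  unfold qBernstein_gf, scal; simpl. unfold mult; simpl.
  replace (pow_n t k) with (t^k) by (symmetry; apply pow_n_pow).
  unfold a0. replace (exp (_ * qnum q (1-x))) with (exp (qnum q (1 - x) * t)) by (f_equal; apply Rmult_comm).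
  unfold Rdiv. ring.
Qed.

Lemma binom_prod k m j : (j <= m)%nat ->
  Binomial.C (k + j) k * Binomial.C (k + m) (k + j) =
  Binomial.C (k + m) k * Binomial.C m j.
Proof.
  intros Hj. unfold Binomial.C.
  replace (k + j - k)%nat with j by lia.
  replace (k + m - (k + j))%nat with (m - j)%nat by lia.
  replace (k + m - k)%nat with m by lia.
  pose proof (INR_fact_neq_0 j). pose proof (INR_fact_neq_0 k).
  pose proof (INR_fact_neq_0 m). pose proof (INR_fact_neq_0 (m - j)).
  pose proof (INR_fact_neq_0 (k + j)).
  field. repeat split; auto.
Qed.

Lemma algebra q x k m : 0 < q < 1 ->
  qnum q x ^ k / INR (fact k) * (qnum q (1 - x) ^ m / INR (fact m)) * INR (fact (k + m)) =
  sum_n_m (fun i => Binomial.C i k * Binomial.C (k + m) i * (-1) ^ (i - k)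
                          * Rpower q ((1 - x) * INR (i - k)) * (qnum q x) ^ i) k (k + m).
Proof.
  intros Hq. rewrite shift_sum. fold (sum_n (fun j => Binomial.C (k + j) k * Binomial.C (k + m) (k + j) * (-1) ^ (k + j - k)
                          * Rpower q ((1 - x) * INR (k + j - k)) * (qnum q x) ^ (k + j)) m).
  rewrite sum_n_Reals.
  set (b := qnum q x). set (r := Rpower q (1 - x)).
  assert (Ha : qnum q (1 - x) = - (r * b) + 1).
  { unfold b, r, qnum. assert (Rpower q (1 - x) * Rpower q x = q).
    { rewrite <- Rpower_plus. replace (1 - x + x) with 1 by ring. apply Rpower_1. lra. }
    replace (- (Rpower q (1 - x) * ((1 - Rpower q x) / (1 - q))) + 1) with ((1 - q - Rpower q (1 - x) + Rpower q (1 - x) * Rpower q x) / (1 - q)) by (field; lra). rewrite H. f_equal. ring. }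
  rewrite Ha, binomial.
  rewrite (sum_eq (fun j => Binomial.C (k + j) k * Binomial.C (k + m) (k + j) * (-1) ^ (k + j - k) *
     Rpower q ((1 - x) * INR (k + j - k)) * b ^ (k + j)) (fun j => Binomial.C m j * (- (r * b)) ^ j * 1 ^ (m - j) * (Binomial.C (k + m) k * b ^ k))).
  - rewrite <- scal_sum.
    replace (Binomial.C (k + m) k) with (INR (fact (k + m)) / (INR (fact k) * INR (fact m))).
    2: { unfold Binomial.C. replace (k + m - k)%nat with m by lia. reflexivity. }
    pose proof (INR_fact_neq_0 k). pose proof (INR_fact_neq_0 m).
    field. auto.
  - intros i Hi. replace (k + i - k)%nat with i by lia.
    rewrite <- Rpower_mult. rewrite Rpower_pow by (unfold Rpower; apply exp_pos).
    fold r. rewrite (binom_prod k m i) by lia.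
    replace (- (r * b)) with ((-1) * r * b) by ring.
    rewrite !Rpow_mult_distr, pow1, pow_add. ring.
Qed.

Theorem theorem6 (q x : R) (k n : nat) (B : nat -> R) :
  0 < q < 1 -> 0 <= x <= 1 ->
  is_modified_qBernstein k x q B ->
  B n = sum_n_m (fun i => Binomial.C i k * Binomial.C n i * (-1) ^ (i - k)
                          * Rpower q ((1 - x) * INR (i - k)) * (qnum q x) ^ i) k n.
Proof.
  intros Hq Hx HB.
  assert (HA : forall t, is_pseries (fun n => B n / INR (fact n)) t (qBernstein_gf k x q t)).
  { intros t. unfold is_pseries. eapply is_series_ext; [|apply (HB t)].
    intros j. simpl. unfold scal; simpl. unfold mult; simpl.
    replace (pow_n t j) with (t^j) by (symmetry; apply pow_n_pow).
    unfold Rdiv. ring. }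
  pose proof (coef_eq _ _ n HA) as E1.
  pose proof (coef_eq _ _ n (gf_series k x q)) as E2.
  rewrite E1 in E2. clear E1.
  pose proof (INR_fact_neq_0 n) as Hf.
  assert (EB : B n = PS_scal (qnum q x ^ k / INR (fact k))
     (PS_incr_n (fun n => qnum q (1 - x) ^ n / INR (fact n)) k) n * INR (fact n)).
  { rewrite <- E2. field. auto. }
  rewrite EB. clear EB E2.
  unfold PS_scal. rewrite PS_incr_n_simplify.
  destruct (Compare_dec.le_lt_dec k n) as [Hl|Hl].
  - destruct (Nat.le_exists_sub k n Hl) as [m [-> _]].
    rewrite (Nat.add_comm m k). replace (k + m - k)%nat with m by lia.
    rewrite <- algebra by exact Hq. unfold scal; simpl. unfold mult; simpl. ring.
  - rewrite sum_n_m_zero by exact Hl. unfold scal, zero; simpl. unfold mult; simpl. ring.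
Qed.
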